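(* Let $(W,S)$ be a chordal Coxeter system with a set $\mathcal B$ of bad irreducible simplices, and suppose that $S$ has no bad separators. Let $B$ be a simplex of $(W,S)$ with two singleton components $\{a\}$ and $\{b\}$ for which there is $c\in S-B$ such that $A=\{a,b,c\}$ is a bad maximal irreducible simplex of $(W,S)$. Then $B-\{a,b\}\subseteq A^\perp$ and $B\cup\{c\}$ is a simplex of $(W,S)$.
   Context: Coxeter system $(W,S)$: $W=\langle S\mid (st)^{m(s,t)}\ (m(s,t)<\infty)\rangle$, $m(s,s)=1$, $m(s,t)=m(t,s)\in\{2,\dots,\infty\}$. $\Gamma(W,S)$: graph on $S$ with edge $\{s,t\}$ iff $s\ne t$, $m(s,t)<\infty$; chordal: every cycle of length $\ge4$ has a chord. A simplex is $A\subseteq S$ with all $m(s,t)<\infty$; $A$ is irreducible if the graph on $A$ with edges $m(s,t)\ge3$ is connected; components of $B$ are vertex sets of connected components of that graph on $B$; maximal irreducible simplex: not properly contained in another irreducible simplex. $A^\perp=\{s\in S: m(s,x)=2\ \forall x\in A\}$. Types ${\bf G}_3,{\bf G}_4$: Coxeter diagram a path with labels $3,5$ resp. $3,3,5$. A set of bad edges is a set $\mathcal B_2$ of pairs $\{a,b\}\subseteq S$ with $5\le m(a,b)<\infty$ such that every irreducible simplex properly containing $\{a,b\}$ has type ${\bf G}_3$ or ${\bf G}_4$; an irreducible simplex is bad if it contains a pair in $\mathcal B_2$; $\mathcal B$ is the set of all bad irreducible simplices. For $c,f\in S$, $B\subseteq S$ is a $(c,f)$-separator if $c,f\notin B$ lie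 in different connected components of $\Gamma(W,S)-B$; minimal if no proper subset is one. A bad separator of $S$ is a subset $B\subseteq S$ for which there are $a,b\in B$ with $m(a,b)=2$ and $c\in S-B$ such that $A=\{a,b,c\}$ is a bad maximal irreducible simplex, $B\subseteq\{a,b\}\cup A^\perp$, and some $f\in S-B$ such that $B$ is a minimal $(c,f)$-separator of $S$. *)

(* Defs.v *)
(* Combinatorial data of a Coxeter system (W,S):
   S is a finite type T, and the Coxeter matrix is m : T -> T -> option nat,
   where [None] encodes m(s,t) = infinity.  All notions in the statement only
   depend on the Coxeter matrix. *)
From mathcomp Require Import all_boot.
Set Implicit Arguments. Unset Strict Implicit. Unset Printing Implicit Defensive.

Section Coxeter.
Variable T : finType.
Variable m : T -> T -> option nat.

Definition coxeter_matrix : Prop :=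
  (forall s, m s s = Some 1) /\ (forall s t, m s t = m t s) /\
  (forall s t, s != t -> forall k, m s t = Some k -> 2 <= k).

Definition mfin (s t : T) : bool := m s t != None.

Definition mge (k : nat) (s t : T) : bool :=
  if m s t is Some n then k <= n else true.

Definition gedge (s t : T) : bool := (s != t) && mfin s t.

Definition chordal : Prop :=
  forall c : seq T, uniq c -> 4 <= size c -> cycle gedge c ->
    exists x y, [/\ x \in c, y \in c, x != y,
                    (next c x != y) && (next c y != x) & gedge x y].

Definition simplex (A : {set T}) : Prop :=
  forall s t, s \in A -> t \in A -> mfin s t.

Definition dgraph (B : {set T}) : rel T :=
  fun s t => [&& s \in B, t \in B, s != t & mge 3 s t].

Definition irreducible (A : {set T}) : Prop :=
  A != set0 /\ forall s t, s \in A -> t \in A -> connect (dgraph A) s t.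

Definition irreducible_simplex (A : {set T}) : Prop :=
  simplex A /\ irreducible A.

Definition component (B C : {set T}) : Prop :=
  exists2 x, x \in B & C = [set y in B | connect (dgraph B) x y].

Definition maximal_irreducible_simplex (A : {set T}) : Prop :=
  irreducible_simplex A /\
  forall A' : {set T}, irreducible_simplex A' -> ~ (A \proper A').

Definition perp (A : {set T}) : {set T} :=
  [set s | [forall x in A, m s x == Some 2]].

Definition typeG3 (A : {set T}) : Prop :=
  exists x y z, [/\ A = [set x; y; z], uniq [:: x; y; z] &
    [/\ m x y = Some 3, m y z = Some 5 & m x z = Some 2]].

Definition typeG4 (A : {set T}) : Prop :=
  exists w x y z, [/\ A = [set w; x; y; z], uniq [:: w; x; y; z] &
    [/\ m w x = Some 3, m x y = Some 3, m y z = Some 5 &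
        [/\ m w y = Some 2, m w z = Some 2 & m x z = Some 2]]].

Definition bad_edges (B2 : {set {set T}}) : Prop :=
  forall e, e \in B2 ->
    exists a b, [/\ e = [set a; b], a != b, mfin a b, mge 5 a b &
      forall A : {set T}, irreducible_simplex A -> e \proper A -> typeG3 A \/ typeG4 A].

Definition bad (B2 : {set {set T}}) (A : {set T}) : Prop :=
  irreducible_simplex A /\ exists2 e, e \in B2 & e \subset A.

Definition separator (c f : T) (B : {set T}) : Prop :=
  [/\ c \notin B, f \notin B &
      ~~ connect [rel x y | [&& x \notin B, y \notin B & gedge x y]] c f].

Definition minimal_separator (c f : T) (B : {set T}) : Prop :=
  separator c f B /\ forall B' : {set T}, B' \proper B -> ~ separator c f B'.

Definition bad_separator (B2 : {set {set T}}) (B : {set T}) : Prop :=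
  exists a b c, [/\ a \in B, b \in B, m a b = Some 2, c \notin B &
    [/\ bad B2 [set a; b; c], maximal_irreducible_simplex [set a; b; c],
        B \subset [set a; b] :|: perp [set a; b; c] &
        exists2 f, f \notin B & minimal_separator c f B]].
End Coxeter.

(* Main.v *)
Require Import Defs.
From mathcomp Require Import all_boot zify.
Set Implicit Arguments. Unset Strict Implicit. Unset Printing Implicit Defensive.

Lemma next_mid (T : eqType) (s1 s2 : seq T) (u v : T) :
  uniq (s1 ++ u :: v :: s2) -> next (s1 ++ u :: v :: s2) u = v.
Proof.
move=> Hu; rewrite next_nth mem_cat !inE eqxx orbT /=.
have Hus1 : u \notin s1.
  apply/negP => Hs1; move: Hu; rewrite cat_uniq => /and3P[_ /hasPn H _]; by have := H u (mem_head _ _); rewrite Hs1.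
case: s1 Hus1 {Hu} => [|y s1] /= Hus1; first by rewrite eqxx.
move: Hus1; rewrite inE negb_or eq_sym => /andP[/negbTE -> Hus1].
rewrite index_cat (negbTE Hus1) /= eqxx addn0 nth_cat ltnNge leqnSn /= subSn // subnn.
by [].
Qed.

Lemma next_wrap (T : eqType) (x : T) (p : seq T) (d : T) :
  uniq (x :: rcons p d) -> next (x :: rcons p d) d = x.
Proof.
move=> Hu; rewrite next_nth !inE mem_rcons inE eqxx orbT /=.
have Hxd : (d == x) = false.
  by apply/negbTE; move: Hu => /= /andP[]; rewrite mem_rcons inE negb_or eq_sym => /andP[].
rewrite eq_sym Hxd; apply: nth_default.
move: Hu => /= /andP[_]; rewrite rcons_uniq => /andP[Hd _].
by rewrite -cats1 index_cat (negbTE Hd) /= eqxx addn0 size_cat /= addn1.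
Qed.

Lemma gedge_sym (T : finType) (m : T -> T -> option nat) :
  (forall s t, m s t = m t s) -> forall s t, gedge m s t = gedge m t s.
Proof. by move=> hsym s t; rewrite /gedge /mfin eq_sym hsym. Qed.

Lemma key (T : finType) (m : T -> T -> option nat) (c a d : T) :
  (forall s t, m s t = m t s) -> chordal m ->
  gedge m c a -> gedge m c d -> a != d ->
  forall q, all (fun v => ~~ ((v == c) || gedge m c v)) q ->
  path (gedge m) a (rcons q d) -> gedge m a d.
Proof.
move=> hsym hch hca hcd had q.
set P := fun v => ~~ ((v == c) || gedge m c v).
have gs := gedge_sym hsym.
have Pa : ~~ P a by rewrite /P hca orbT.
have Pd : ~~ P d by rewrite /P hcd orbT.
have Pc : ~~ P c by rewrite /P eqxx.
elim: {q} (size q).+1 {-2}q (ltnSn (size q)) => // n IH q Hsz HP Hp.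
have Hl : last a (rcons q d) = d by rewrite last_rcons.
move: Hl; case: (shortenP Hp) => p' Hp' Hu Hsub.
case/lastP: p' Hp' Hu Hsub => [|q' d'] Hp' Hu Hsub /=.
  by move=> Had; rewrite Had eqxx in had.
rewrite last_rcons => Ed; subst d'.
have Hdq' : d \notin q' by move: Hu => /= /andP[_]; rewrite rcons_uniq => /andP[].
have Haq' : a \notin q' by move: Hu => /= /andP[]; rewrite mem_rcons inE negb_or => /andP[].
have HP' : all P q'.
  apply/allP => x Hx; have := Hsub x; rewrite !mem_rcons !inE Hx orbT => /(_ isT).
  case/orP => [/eqP Exd|]; first by move: Hx; rewrite Exd (negbTE Hdq').
  by move/(allP HP).
have Hsz' : size q' <= n.
  rewrite -ltnS; apply: leq_trans Hsz; rewrite ltnS.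
  have Hu2 : uniq (rcons q' d) by case/andP: Hu.
  have := uniq_leq_size Hu2 Hsub; by rewrite !size_rcons.
have IH' : forall q'', size q'' < size q' -> all P q'' -> path (gedge m) a (rcons q'' d) -> gedge m a d.
  move=> q'' Hs; apply: IH; exact: leq_trans Hs Hsz'.
have [Eq0|Hne] := eqVneq q' [::]; first by move: Hp'; rewrite Eq0 /= andbT.
have HcP : forall v, v \in q' -> P v by move=> v; apply/allP.
have Hcq' : c \notin q' by apply/negP => /HcP; rewrite (negbTE Pc).
have Huniq : uniq (c :: a :: rcons q' d).
  rewrite cons_uniq Hu andbT !inE mem_rcons inE (negbTE Hcq') negb_or orbF.
  by case/andP: hca => -> _; case/andP: hcd.
have Hcyc : cycle (gedge m) (c :: a :: rcons q' d).
  by rewrite /= hca -cats1 cat_path Hp' /= last_rcons gs hcd.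
have Hsize : 4 <= size (c :: a :: rcons q' d).
  by rewrite /= size_rcons; case: (q') Hne.
have [u [v [Hu' Hv' Huv /andP[Hn1 Hn2] Hg]]] := hch _ Huniq Hsize Hcyc.
have Nca : next (c :: a :: rcons q' d) c = a.
  exact: (next_mid (s1:=[::]) (s2:=rcons q' d) Huniq).
have Ndc : next (c :: a :: rcons q' d) d = c.
  exact: (next_wrap (x:=c) (p:=a :: q') Huniq).
have Hc : forall w, w \in c :: a :: rcons q' d -> next (c :: a :: rcons q' d) c != w ->
    next (c :: a :: rcons q' d) w != c -> gedge m c w -> False.
  move=> w; rewrite !inE mem_rcons inE => /or4P[/eqP->|/eqP->|/eqP->|Hw].
  - by rewrite /gedge eqxx.
  - by rewrite Nca eqxx.
  - by move=> _; rewrite Ndc eqxx.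
  - by move: (HcP _ Hw); rewrite /P => /negP H _ _ Hcw; apply: H; rewrite Hcw orbT.
have Ha : forall w, w \in q' -> next (c :: a :: rcons q' d) a != w -> gedge m a w -> gedge m a d.
  move=> w Hw Hn Haw.
  have [q1 [q2 Eq]] : exists q1 q2, q' = q1 ++ w :: q2 by case/splitPr: Hw => q1 q2; exists q1, q2.
  case: q1 Eq => [|x q1] Eq.
    move: Hn Huniq; rewrite Eq => Hn Huniq.
    by exfalso; move/eqP: Hn; apply; exact: (next_mid (s1:=[:: c]) (s2:=rcons q2 d) Huniq).
  apply: (IH' (w :: q2)).
  - by rewrite Eq /= size_cat /= ltnS leq_addl.
  - by apply/allP => y Hy; apply: HcP; rewrite Eq mem_cat Hy orbT.
  - rewrite /= Haw /=; move: Hp'; rewrite Eq rcons_cat cat_path => /andP[_].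
    by rewrite /= => /andP[_ ->].
have Hd : forall w, w \in q' -> next (c :: a :: rcons q' d) w != d -> gedge m d w -> gedge m a d.
  move=> w Hw Hn Hdw.
  have [q1 [q2 Eq]] : exists q1 q2, q' = q1 ++ w :: q2 by case/splitPr: Hw => q1 q2; exists q1, q2.
  case: q2 Eq => [|x q2] Eq.
    move: Hn Huniq; rewrite Eq rcons_cat => Hn Huniq.
    by exfalso; move/eqP: Hn; apply; exact: (next_mid (s1:=c :: a :: q1) (s2:=[::]) Huniq).
  apply: (IH' (rcons q1 w)).
  - by rewrite Eq size_cat size_rcons /= !addnS !ltnS leq_addr.
  - by apply/allP => y; rewrite mem_rcons inE => /orP[/eqP->|Hy]; apply: HcP; rewrite Eq mem_cat ?Hy ?inE ?eqxx ?orbT.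
  - move: Hp'; rewrite Eq rcons_cat cat_path => /andP[H1] /= /andP[H2 _].
    by rewrite !rcons_path last_rcons H1 H2 gs.
have Hord : forall u v q1 q2 q3, q' = q1 ++ u :: q2 ++ v :: q3 ->
    next (c :: a :: rcons q' d) u != v -> gedge m u v -> gedge m a d.
  move=> u1 v1 q1 q2 q3 Eq Hn Huv1.
  case: q2 Eq => [|x q2] Eq.
    move: Hn Huniq; rewrite Eq rcons_cat => Hn Huniq.
    by exfalso; move/eqP: Hn; apply; exact: (next_mid (s1:=c :: a :: q1) (s2:=rcons q3 d) Huniq).
  apply: (IH' (q1 ++ u1 :: v1 :: q3)).
  - by rewrite Eq !size_cat /= size_cat /= ltn_add2l !ltnS addnS ltnS leq_addl.
  - apply/allP => y; rewrite !(mem_cat, inE) => /or4P[Hy|/eqP->|/eqP->|Hy]; apply: HcP;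
      by rewrite Eq !(mem_cat, inE) ?Hy ?eqxx ?orbT.
  - move: Hp'; rewrite Eq rcons_cat cat_path => /andP[H1] /= /andP[H2].
    move=> /andP[_]; rewrite rcons_cat cat_path => /andP[_] /= /andP[_ H3].
    by rewrite rcons_cat cat_path H1 /= H2 Huv1 H3.
have Hqq : forall u v, u \in q' -> v \in q' -> u != v ->
    next (c :: a :: rcons q' d) u != v -> next (c :: a :: rcons q' d) v != u ->
    gedge m u v -> gedge m a d.
  move=> u1 v1 Hu1 Hv1 Huv1 Hn1' Hn2' Hg1.
  have [p1 [p2 Eq]] : exists p1 p2, q' = p1 ++ u1 :: p2 by case/splitPr: Hu1 => p1 p2; exists p1, p2.
  move: Hv1; rewrite Eq mem_cat inE => /orP[Hv1|Hv1].
    have [q1 [q2 Eq1]] : exists q1 q2, p1 = q1 ++ v1 :: q2 by case/splitPr: Hv1 => q1 q2; exists q1, q2.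
    apply: (Hord v1 u1 q1 q2 p2) => //; last by rewrite gs.
    by rewrite Eq Eq1 -catA.
  case/orP: Hv1 => [/eqP E|Hv1]; first by rewrite E eqxx in Huv1.
  have [q2 [q3 Eq1]] : exists q1 q2, p2 = q1 ++ v1 :: q2 by case/splitPr: Hv1 => q1 q2; exists q1, q2.
  by apply: (Hord u1 v1 p1 q2 q3) => //; rewrite Eq Eq1.
have Hs : forall w, w \in c :: a :: rcons q' d -> [\/ w = c, w = a, w = d | w \in q'].
  by move=> w; rewrite !inE mem_rcons inE => /or4P[/eqP->|/eqP->|/eqP->|->]; [constructor 1|constructor 2|constructor 3|constructor 4].
case: (Hs _ Hu') => [Eu|Eu|Eu|Iu].
- subst u; by case: (Hc v Hv' Hn1 Hn2 Hg).
- subst u; case: (Hs _ Hv') => [Ev|Ev|Ev|Iv]; try subst v.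
  + by case: (Hc a Hu' Hn2 Hn1); rewrite gs.
  + by rewrite eqxx in Huv.
  + by [].
  + exact: (Ha v Iv Hn1 Hg).
- subst u; case: (Hs _ Hv') => [Ev|Ev|Ev|Iv]; try subst v.
  + by case: (Hc d Hu' Hn2 Hn1); rewrite gs.
  + by rewrite gs.
  + by rewrite eqxx in Huv.
  + exact: (Hd v Iv Hn2 Hg).
- case: (Hs _ Hv') => [Ev|Ev|Ev|Iv]; try subst v.
  + by case: (Hc u Hu' Hn2 Hn1); rewrite gs.
  + by apply: (Ha u Iu Hn2); rewrite gs.
  + by apply: (Hd u Iu Hn1); rewrite gs.
  + exact: (Hqq u v Iu Iv Huv Hn1 Hn2 Hg).
Qed.

Lemma comp_single (T : finType) (m : T -> T -> option nat) (B : {set T}) (a : T) :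
  coxeter_matrix m -> simplex m B -> component m B [set a] ->
  a \in B /\ forall y, y \in B -> y != a -> m a y = Some 2.
Proof.
move=> [h1 [hsym h2]] hB [x HxB E].
have Hx : x \in [set a] by rewrite E inE HxB connect0.
rewrite inE in Hx; move/eqP: Hx => Hx; subst x.
split => // y HyB Hya.
have := hB a y HxB HyB; rewrite /mfin.
case Em: (m a y) => [k|] // _.
have Hk : 2 <= k by apply: (h2 a y _ k Em); rewrite eq_sym.
case: (ltngtP k 2) => [|Hk3|-> //]; first by rewrite ltnNge Hk.
have : y \in [set a].
  rewrite E inE HyB; apply: connect1.
  by rewrite /dgraph HxB HyB eq_sym Hya /mge Em.
by rewrite inE (negbTE Hya).
Qed.

Lemma ext_perp (T : finType) (m : T -> T -> option nat) (A : {set T}) (v : T) :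
  coxeter_matrix m -> maximal_irreducible_simplex m A -> v \notin A ->
  (forall x, x \in A -> mfin m v x) -> forall x, x \in A -> m v x = Some 2.
Proof.
move=> [h1 [hsym h2]] [[hAs [hA0 hAc]] hmax] hv hfin x Hx.
have Hvx : v != x by apply/negP => /eqP E; rewrite E Hx in hv.
have := hfin x Hx; rewrite /mfin.
case Em: (m v x) => [k|] // _.
have Hk : 2 <= k by apply: (h2 v x Hvx k Em).
case: (ltngtP k 2) => [|Hk3|-> //]; first by rewrite ltnNge Hk.
exfalso; apply: (hmax (v |: A)); last first.
  apply/properP; split; first exact: subsetU1.
  by exists v => //; rewrite in_setU1 eqxx.
have dsym : symmetric (dgraph m (v |: A)).
  by move=> s t; rewrite /dgraph /mge hsym eq_sym; case: (s \in _); case: (t \in _).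
have Hsub : forall s t, connect (dgraph m A) s t -> connect (dgraph m (v |: A)) s t.
  apply: connect_sub => s t; rewrite /dgraph => /and4P[Hs Ht Hst Hm].
  by apply: connect1; rewrite /dgraph !in_setU1 Hs Ht Hst Hm !orbT.
have Hcx : forall s, s \in v |: A -> connect (dgraph m (v |: A)) s x.
  move=> s; rewrite in_setU1 => /orP[/eqP->|Hs].
    by apply: connect1; rewrite /dgraph !in_setU1 eqxx Hx orbT Hvx /mge Em.
  exact: Hsub (hAc s x Hs Hx).
split.
  move=> s t; rewrite !in_setU1 => /orP[/eqP->|Hs] /orP[/eqP->|Ht].
  - by rewrite /mfin h1.
  - exact: hfin.
  - by rewrite /mfin hsym; apply: hfin.
  - exact: hAs.
split.
  by apply/set0Pn; exists v; rewrite in_setU1 eqxx.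
move=> s t Hs Ht; apply: connect_trans (Hcx s Hs) _.
by rewrite (sym_connect_sym dsym); apply: Hcx.
Qed.

Theorem lemma4p5 (T : finType) (m : T -> T -> option nat)
    (B2 : {set {set T}}) (B : {set T}) (a b c : T) :
  coxeter_matrix m -> chordal m -> bad_edges m B2 ->
  (forall X : {set T}, ~ bad_separator m B2 X) ->
  simplex m B -> a != b ->
  component m B [set a] -> component m B [set b] ->
  c \notin B ->
  bad m B2 [set a; b; c] -> maximal_irreducible_simplex m [set a; b; c] ->
  B :\: [set a; b] \subset perp m [set a; b; c] /\ simplex m (c |: B).
Proof.
move=> hcox hch _ hns hB hab hca hcb hc hbad hmax.
have [h1 [hsym h2]] := hcox.
have gs := gedge_sym hsym.
have [aB Ha] := comp_single hcox hB hca.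
have [bB Hb] := comp_single hcox hB hcb.
have inAa : a \in [set a; b; c] by rewrite !inE eqxx.
have inAb : b \in [set a; b; c] by rewrite !inE eqxx orbT.
have inAc : c \in [set a; b; c] by rewrite !inE eqxx !orbT.
have hAs : simplex m [set a; b; c] by case: hmax => [[]].
have mab : m a b = Some 2 by apply: Ha => //; rewrite eq_sym.
have Hca : c != a by apply/negP => /eqP E; rewrite E aB in hc.
have Hcb : c != b by apply/negP => /eqP E; rewrite E bB in hc.
have gca : gedge m c a by rewrite /gedge Hca hAs.
have gcb : gedge m c b by rewrite /gedge Hcb hAs.
have Hfin : forall f, f \in B -> mfin m c f.
  move=> f HfB; rewrite /mfin; case Ecf: (m c f) => [k|] //; exfalso.
  have Hfc : f != c by apply/negP => /eqP E; rewrite -E HfB in hc.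
  have ngcf : ~~ gedge m c f by rewrite /gedge /mfin Ecf andbF.
  have Hfa : f != a by apply/negP => /eqP E; move: Ecf; rewrite E; move: (hAs c a inAc inAa); rewrite /mfin; case: (m c a).
  have Hfb : f != b by apply/negP => /eqP E; move: Ecf; rewrite E; move: (hAs c b inAc inAb); rewrite /mfin; case: (m c b).
  pose P := fun v => (v == c) || gedge m c v.
  pose R := [rel x y | [&& ~~ P x, ~~ P y & gedge m x y]].
  pose Cf := [set v | connect R f v].
  pose S := [set v | gedge m c v && [exists w in Cf, gedge m v w]].
  have nPf : ~~ P f by rewrite /P negb_or Hfc ngcf.
  have Rsym : symmetric R by move=> x y; rewrite /R /= gs andbCA.
  have Rpath : forall x p, path R x p -> all (fun y => ~~ P y) p /\ path (gedge m) x p.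
    move=> x p; elim: p x => [|y p IH] x //= /andP[/and3P[_ nPy gxy] Hp].
    by have [H1 H2] := IH y Hp; rewrite nPy gxy H1 H2.
  have CfP : forall y, y \in Cf -> ~~ P y.
    move=> y; rewrite inE => /connectP[p Hp ->].
    have [H1 _] := Rpath f p Hp; case: (lastP p) H1 => [|p' z] //.
    by rewrite all_rcons last_rcons => /andP[].
  have SP : forall y, y \in S -> gedge m c y by move=> y; rewrite inE => /andP[].
  have gadj : forall x v, x \in [set a; b] -> v \in S -> x != v -> gedge m x v.
    move=> x v Hx Hv Hxv.
    have gcx : gedge m c x by move: Hx; rewrite !inE => /orP[/eqP->|/eqP->].
    move: Hv; rewrite inE => /andP[gcv /existsP[w /andP[Hw gvw]]].
    move: Hw; rewrite inE => /connectP[p Hp Ew].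
    have [H1 H2] := Rpath f p Hp.
    apply: (key hsym hch gcx gcv Hxv (q := f :: p)).
      by rewrite /= nPf H1.
    rewrite /= rcons_path H2 -Ew (gs w v) gvw andbT andbT.
    have Hxf : x != f by move: Hx; rewrite !inE => /orP[/eqP->|/eqP->]; rewrite eq_sym.
    rewrite /gedge Hxf /mfin.
    by move: Hx; rewrite !inE => /orP[/eqP->|/eqP->]; [rewrite Ha | rewrite Hb].
  have nSP : forall y, ~~ P y -> y \notin S.
    by move=> y; apply: contra => /SP gcy; rewrite /P gcy orbT.
  have ncS : c \notin S by rewrite inE /gedge eqxx.
  have fCf : f \in Cf by rewrite inE connect0.
  apply: (hns S); exists a, b, c; split => //.
  - rewrite inE gca; apply/existsP; exists f; rewrite fCf /= /gedge eq_sym Hfa /mfin Ha //.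
  - rewrite inE gcb; apply/existsP; exists f; rewrite fCf /= /gedge eq_sym Hfb /mfin Hb //.
  split => //.
  - apply/subsetP => v Hv; rewrite in_setU; case Hvab: (v \in [set a; b]) => //=.
    rewrite inE; apply/forallP => x; apply/implyP => Hx; apply/eqP.
    have gcv := SP v Hv.
    move: Hvab; rewrite !inE => /negbT; rewrite negb_or => /andP[Hva Hvb].
    apply: (ext_perp hcox hmax) => //.
      rewrite !inE (negbTE Hva) (negbTE Hvb) /= eq_sym.
      by case/andP: gcv.
    move=> y; rewrite !inE => /orP[/orP[/eqP->|/eqP->]|/eqP->].
    + have Hain : a \in [set a; b] by rewrite !inE eqxx.
      have Hav : a != v by rewrite eq_sym.
      have := gadj a v Hain Hv Hav.
      by case/andP; rewrite /mfin hsym.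
    + have Hbin : b \in [set a; b] by rewrite !inE eqxx orbT.
      have Hbv : b != v by rewrite eq_sym.
      have := gadj b v Hbin Hv Hbv.
      by case/andP; rewrite /mfin hsym.
    + by case/andP: gcv; rewrite /mfin hsym.
  exists f; first by rewrite inE (negbTE ngcf).
  split.
    split => //; first by rewrite inE (negbTE ngcf).
    apply/negP => Hcon.
    have R'sym : symmetric [rel x y | [&& x \notin S, y \notin S & gedge m x y]].
      by move=> x y; rewrite /= gs andbCA.
    rewrite (sym_connect_sym R'sym) in Hcon.
    have Hclos : forall x p, x \in Cf ->
        path [rel x y | [&& x \notin S, y \notin S & gedge m x y]] x p -> last x p \in Cf.
      move=> x p; elim: p x => // y p IH x Hx /= /andP[/and3P[_ nSy gxy] Hp]; apply: IH Hp.
      have nPx := CfP x Hx.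
      case Py: (P y).
        move: Py; rewrite /P => /orP[/eqP Eyc|gcy].
          by move: nPx; rewrite /P -Eyc gs gxy orbT.
        move: nSy; rewrite inE gcy /= => /existsP; case; exists x; rewrite Hx /=.
        by rewrite gs.
      move: Hx; rewrite !inE => Hx; apply: connect_trans Hx (connect1 _).
      by rewrite /= nPx Py gxy.
    move: Hcon => /connectP[p Hp Ec].
    have := Hclos f p fCf Hp; rewrite -Ec => /CfP.
    by rewrite /P eqxx.
  move=> S' HS' [_ _ Hn]; apply: (negP Hn).
  have [subS' [v HvS HvS']] := properP HS'.
  have nS'S : forall y, y \notin S -> y \notin S'.
    by move=> y; apply: contra; apply: (subsetP subS').
  have gcv := SP v HvS.
  move: HvS; rewrite inE => /andP[_ /existsP[w /andP[Hw gvw]]].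
  have nPw := CfP w Hw.
  apply: (connect_trans (y := v)); first apply: connect1.
    by rewrite /= (nS'S c ncS) HvS' gcv.
  apply: (connect_trans (y := w)); first apply: connect1.
    by rewrite /= HvS' (nS'S w (nSP w nPw)) gvw.
  move: Hw; rewrite inE (sym_connect_sym Rsym); apply: connect_sub => x y /= /and3P[nPx nPy gxy].
  by apply: connect1; rewrite /= (nS'S x (nSP x nPx)) (nS'S y (nSP y nPy)) gxy.
have Hperp : forall d, d \in B -> d \notin [set a; b] -> d \in perp m [set a; b; c].
  move=> d HdB Hdab; rewrite inE; apply/forallP => x; apply/implyP => Hx.
  apply/eqP; apply: (ext_perp hcox hmax) => //.
    move: Hdab; rewrite !inE => Hdab; rewrite negb_or Hdab /=.
    by apply/negP => /eqP E; rewrite -E HdB in hc.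
  move: Hdab; rewrite !inE negb_or => /andP[Hda Hdb].
  move=> y; rewrite !inE => /orP[/orP[/eqP->|/eqP->]|/eqP->]; rewrite /mfin hsym.
  - by rewrite Ha.
  - by rewrite Hb.
  - exact: Hfin.
split.
  by apply/subsetP => d; rewrite inE => /andP[Hdab HdB]; apply: Hperp.
move=> s t; rewrite !in_setU1 => /orP[/eqP->|Hs] /orP[/eqP->|Ht].
- by rewrite /mfin h1.
- exact: Hfin.
- by rewrite /mfin hsym; apply: Hfin.
- exact: hB.
Qed.
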